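(* Let $P$ be a finite poset and $I\subseteq k[x_P]$ a monomial ideal. Then there is a poset filter $\mathcal{F}\subseteq\mathrm{Hom}(P,\mathbb{N})$ such that the set of monomials of $I$ equals $\{\overline{\Lambda}\phi:\phi\in\mathcal{F}\}$ if and only if $I$ is $P$-stable.
   Context: $\mathbb{N}=\{0,1,\dots\}$; $\mathrm{Hom}(P,\mathbb{N})$ is the set of isotone maps $P\to\mathbb{N}$ ordered pointwise. The ascent of $\phi$ is $\Lambda\phi=\{(p,i)\in P\times\mathbb{N}:\phi(q)\le i<\phi(p)\ \forall q<p\}$, and $\overline{\Lambda}\phi=\prod_{(p,i)\in\Lambda\phi}x_p\in k[x_P]$ ($k$ a field, $k[x_P]$ the polynomial ring in variables $x_p$, $p\in P$). For $b\in P$, a $b$-chain is a multichain $C: p_1\le\dots\le p_r$ in $P$ with $p_r\le b$; its length is $r$ and $m_C=\prod_{i=1}^r x_{p_i}$. $C$ is in a monomial $m$ if $m_C$ divides $m$; it is a longest $b$-chain in $m$ if no $b$-chain in $m$ is longer. $C$ goes through $a$ if $a\le b$ and $a$ is comparable to every $p_i$ (so $a$ can be inserted to give a longer multichain). For an antichain $B$, $m_B=\prod_{b\in B}x_b$. A monomial ideal $I\subseteq k[x_P]$ is $P$-stable if: whenever $m=n\,m_B\in I$ with $n$ a monomial and $B$ an antichain, and $a\in P$ is such that for every $b\in B$ some longest $b$-chain in $m$ goes through $a$, then $n\,x_a\in I$. *)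

(* Defs.v *)
From mathcomp Require Import all_boot all_order all_algebra.
From mathcomp Require Import mpoly.
Set Implicit Arguments. Unset Strict Implicit. Unset Printing Implicit Defensive.
Import GRing.Theory.
Local Open Scope ring_scope.

(* A finite poset P is represented by its underlying set 'I_n together with
   a (boolean) partial order [le] on it. *)
Definition partial_order n (le : rel 'I_n) : Prop :=
  [/\ reflexive le, antisymmetric le & transitive le].

Definition slt n (le : rel 'I_n) (q p : 'I_n) : bool := le q p && (q != p).

Definition isotone n (le : rel 'I_n) (phi : {ffun 'I_n -> nat}) : Prop :=
  forall p q, le p q -> (phi p <= phi q)%N.

Definition hom_filter n (le : rel 'I_n) (F : {ffun 'I_n -> nat} -> Prop) : Prop :=
  (forall phi, F phi -> isotone le phi) /\
  (forall phi psi, F phi -> isotone le psi -> (forall p, phi p <= psi p)%N -> F psi).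

Definition ascent n (le : rel 'I_n) (phi : {ffun 'I_n -> nat}) (p : 'I_n) (i : nat) : bool :=
  (i < phi p)%N && [forall q : 'I_n, slt le q p ==> (phi q <= i)%N].

(* Lambda-bar phi = prod_{(p,i) in Lambda phi} x_p, as an exponent vector:
   the exponent of x_p is #{i : (p,i) in Lambda phi} (such i are < phi p). *)
Definition ascent_mon n (le : rel 'I_n) (phi : {ffun 'I_n -> nat}) : 'X_{1..n} :=
  [multinom #|[pred i : 'I_(phi p) | ascent le phi p i]| | p < n].

Definition is_ideal (k : fieldType) n (I : {pred {mpoly k[n]}}) : Prop :=
  [/\ 0 \in I,
      (forall p q, p \in I -> q \in I -> p + q \in I) &
      (forall p q, q \in I -> p * q \in I)].

(* monomial ideal: generated by monomials, i.e. p in I iff every monomial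
   occurring in p lies in I. *)
Definition is_monomial_ideal (k : fieldType) n (I : {pred {mpoly k[n]}}) : Prop :=
  is_ideal I /\ (forall p, p \in I <-> (forall m, m \in msupp p -> 'X_[m] \in I)).

(* multichains, represented as sequences p_1 <= ... <= p_r *)
Definition mon_of_seq n (C : seq 'I_n) : 'X_{1..n} :=
  [multinom count_mem p C | p < n].

Definition mon_divides n (m1 m2 : 'X_{1..n}) : Prop :=
  forall p, (m1 p <= m2 p)%N.

Definition bchain n (le : rel 'I_n) (b : 'I_n) (C : seq 'I_n) : Prop :=
  sorted le C /\ (forall p, p \in C -> le p b).

Definition bchain_in n (le : rel 'I_n) (b : 'I_n) (m : 'X_{1..n}) (C : seq 'I_n) : Prop :=
  bchain le b C /\ mon_divides (mon_of_seq C) m.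

Definition longest_bchain_in n (le : rel 'I_n) (b : 'I_n) (m : 'X_{1..n})
    (C : seq 'I_n) : Prop :=
  bchain_in le b m C /\
  (forall C', bchain_in le b m C' -> (size C' <= size C)%N).

Definition goes_through n (le : rel 'I_n) (a b : 'I_n) (C : seq 'I_n) : Prop :=
  le a b /\ (forall p, p \in C -> le a p || le p a).

Definition antichain n (le : rel 'I_n) (B : {set 'I_n}) : Prop :=
  forall b b', b \in B -> b' \in B -> b != b' -> ~~ le b b' /\ ~~ le b' b.

Definition mon_of_set n (B : {set 'I_n}) : 'X_{1..n} :=
  [multinom (p \in B : nat) | p < n].

Definition P_stable (k : fieldType) n (le : rel 'I_n) (I : {pred {mpoly k[n]}}) : Prop :=
  forall (m0 : 'X_{1..n}) (B : {set 'I_n}) (a : 'I_n),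
    antichain le B ->
    'X_[(m0 + mon_of_set B)%MM] \in I ->
    (forall b, b \in B -> exists C,
        longest_bchain_in le b (m0 + mon_of_set B)%MM C /\ goes_through le a b C) ->
    'X_[(m0 + mnm1 a)%MM] \in I.

(* Main.v *)
Require Import Defs.
From mathcomp Require Import all_boot all_order all_algebra.
From mathcomp Require Import mpoly.
From mathcomp Require Import zify.
Set Implicit Arguments. Unset Strict Implicit. Unset Printing Implicit Defensive.

Lemma card_ge k M : #|[pred i : 'I_k | (M <= i)%N]| = (k - M)%N.
Proof.
rewrite -sum1_card big_mkcond /=.
elim: k => [|k IH]; first by rewrite big_ord0.
rewrite big_ord_recr /= inE /=.
rewrite (eq_bigr (fun i : 'I_k => if (M <= i)%N then 1%N else 0%N)); last first.
  by move=> i _; rewrite inE.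
rewrite IH; case: leqP => h; lia.
Qed.

Lemma count_mem_filter (T : eqType) (P : pred T) (q : T) s :
  count_mem q (filter P s) = if P q then count_mem q s else 0%N.
Proof.
elim: s => [|x s IH] /=; first by case: (P q).
case: (eqVneq x q) => [->|ne].
  by case Pq: (P q) => /=; rewrite IH Pq ?eqxx.
by case: (P x) => /=; rewrite ?(negbTE ne) IH.
Qed.

Section S.
Variable n : nat.
Variable le : rel 'I_n.
Hypothesis po : partial_order le.

Lemma refl : reflexive le. Proof. by case: po. Qed.
Lemma anti : antisymmetric le. Proof. by case: po. Qed.
Lemma trans : transitive le. Proof. by case: po. Qed.

Definition Mx (phi : 'I_n -> nat) p := (\max_(q | slt le q p) phi q)%N.

Lemma ascent_monE (phi : {ffun 'I_n -> nat}) p :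
  ascent_mon le phi p = (phi p - Mx phi p)%N.
Proof.
rewrite /ascent_mon mnmE -(card_ge (phi p) (Mx phi p)).
apply: eq_card => i; rewrite !inE /ascent ltn_ord /=.
apply/forallP/bigmax_leqP => H q.
  by move=> hq; exact: (implyP (H q) hq).
by apply/implyP; exact: H.
Qed.

Definition nb p := #|[pred q | le q p]|.

Lemma nb_lt q p : slt le q p -> (nb q < nb p)%N.
Proof.
move=> /andP[hqp hne]; apply: proper_card; apply/properP; split.
  by apply/subsetP => x; rewrite !inE => hx; exact: trans hx hqp.
exists p; rewrite !inE ?refl //.
apply/negP => hpq; move/negP: hne; apply; apply/eqP; apply: anti.
by rewrite hqp hpq.
Qed.

Lemma poset_ind (P : 'I_n -> Prop) :
  (forall p, (forall q, slt le q p -> P q) -> P p) -> forall p, P p.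
Proof.
move=> H p; have [k hk] : exists k, (nb p < k)%N by exists (nb p).+1.
elim: k p hk => // k IH p hp; apply: H => q hq; apply: IH.
by have := nb_lt hq; lia.
Qed.

Lemma Mx_le (phi : 'I_n -> nat) p :
  (forall p q, le p q -> phi p <= phi q)%N -> (Mx phi p <= phi p)%N.
Proof. by move=> h; apply/bigmax_leqP => q /andP[hq _]; exact: h. Qed.

Lemma asc_inj (phi psi : {ffun 'I_n -> nat}) :
  isotone le phi -> isotone le psi -> ascent_mon le phi = ascent_mon le psi -> phi = psi.
Proof.
move=> hphi hpsi E; apply/ffunP; apply: poset_ind => p IH; change (phi p = psi p).
have e1 := ascent_monE phi p; have e2 := ascent_monE psi p.
rewrite E in e1.
have hM : Mx phi p = Mx psi p by apply: eq_bigr => q hq; exact: IH.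
have := Mx_le p hphi; have := Mx_le p hpsi.
lia.
Qed.

Definition chainb (b : 'I_n) (m : 'X_{1..n}) (s : seq 'I_n) : bool :=
  [&& sorted le s, all (le^~ b) s & [forall q, count_mem q s <= m q]%N].

Lemma bchain_inP b m s : bchain_in le b m s <-> chainb b m s.
Proof.
rewrite /bchain_in /bchain /mon_divides /chainb; split.
  move=> [[h1 h2] h3]; rewrite h1 /=; apply/andP; split.
    by apply/allP => x; exact: h2.
  by apply/forallP => q; have := h3 q; rewrite /mon_of_seq mnmE.
move=> /and3P[h1 /allP h2 /forallP h3]; split => // q.
by rewrite /mon_of_seq mnmE; exact: h3.
Qed.

Lemma size_sum_count (s : seq 'I_n) : size s = (\sum_q count_mem q s)%N.
Proof.
elim: s => [|x s IH] /=; first by rewrite big1.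
have h1 : (\sum_q (x == q : nat))%N = 1%N.
  rewrite (bigD1 x) // eqxx big1 ?addn0 //.
  by move=> q hq; rewrite eq_sym (negbTE hq).
by rewrite IH big_split /= h1.
Qed.

Lemma size_le_deg s (m : 'X_{1..n}) :
  [forall q, count_mem q s <= m q]%N -> (size s <= mdeg m)%N.
Proof.
move=> /forallP h; rewrite size_sum_count mdegE; apply: leq_sum => q _; exact: h.
Qed.

Definition Lm (m : 'X_{1..n}) (p : 'I_n) : nat :=
  (\max_(k < (mdeg m).+1 | [exists t : k.-tuple 'I_n, chainb p m t]) k)%N.

Lemma L1 m p s : chainb p m s -> (size s <= Lm m p)%N.
Proof.
move=> h; have hs : (size s < (mdeg m).+1)%N.
  by rewrite ltnS size_le_deg //; case/and3P: h.
apply: (@leq_bigmax_cond _ _ (fun k : 'I_ _ => nat_of_ord k) (Ordinal hs)) => /=.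
by apply/existsP; exists (in_tuple s).
Qed.

Lemma L2 m p : exists s, chainb p m s /\ size s = Lm m p.
Proof.
rewrite /Lm; apply: (big_ind (fun x => exists s, chainb p m s /\ size s = x)).
- exists [::]; split => //; rewrite /chainb /=; apply/forallP => q //.
- move=> x y [s1 [h1 e1]] [s2 [h2 e2]]; rewrite /maxn; case: ltnP => _.
    by exists s2. by exists s1.
- move=> k /existsP[t ht]; exists (tval t); split => //; exact: size_tuple.
Qed.

Lemma Lm_iso m p q : le p q -> (Lm m p <= Lm m q)%N.
Proof.
move=> hpq; have [s [hs <-]] := L2 m p; apply: L1.
case/and3P: hs => h1 /allP h2 h3; rewrite /chainb h1 h3 andbT /=.
by apply/allP => x hx; exact: trans (h2 x hx) hpq.
Qed.

Lemma pairwise_nseq k (x : 'I_n) : pairwise le (nseq k x).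
Proof. by elim: k => //= k IH; rewrite IH all_nseq refl orbT. Qed.

Lemma ext m C p : chainb p m C -> p \notin C -> chainb p m (C ++ nseq (m p) p).
Proof.
case/and3P => h1 h2 /forallP h3 hp.
rewrite /chainb all_cat h2 all_nseq refl orbT /=.
have hs : sorted le (C ++ nseq (m p) p).
  rewrite (sorted_pairwise trans) pairwise_cat pairwise_nseq andbT.
  rewrite -(sorted_pairwise trans) h1 andbT.
  by apply/allrelP => x y hx; rewrite mem_nseq => /andP[_ /eqP ->]; exact: (allP h2).
rewrite hs /=.
apply/forallP => q; rewrite count_cat count_nseq /=.
case: (eqVneq p q) => [<-|ne] /=.
  by move/count_memPn: hp => ->; rewrite mul1n.
by rewrite mul0n addn0 h3.
Qed.

Lemma Mx_spec (f : 'I_n -> nat) p :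
  Mx f p = 0%N \/ exists q, slt le q p /\ f q = Mx f p.
Proof.
rewrite /Mx; apply: (big_ind (fun x => x = 0%N \/ exists q, slt le q p /\ f q = x)).
- by left.
- move=> x y hx hy; rewrite /maxn; case: ltnP => _; [exact hy | exact hx].
- by move=> q hq; right; exists q.
Qed.

Lemma Lm_rec m p : Lm m p = (Mx (Lm m) p + m p)%N.
Proof.
apply/eqP; rewrite eqn_leq; apply/andP; split.
  have [s [hs <-]] := L2 m p.
  set C := filter (predC1 p) s.
  have hsz : size s = (size C + count_mem p s)%N.
    rewrite size_filter addnC -(count_predC (pred1 p) s); congr addn.
  have hcp : (count_mem p s <= m p)%N by case/and3P: hs => _ _ /forallP.
  suff : (size C <= Mx (Lm m) p)%N by lia.
  case/and3P: hs => h1 /allP h2 /forallP h3.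
  have hC : pairwise le C by apply: pairwise_filter; rewrite -(sorted_pairwise trans).
  have : C = [::] \/ exists C' q, C = rcons C' q.
    by case: (lastP C) => [|C' q]; [left | right; exists C', q].
  case => [->|[C' [q eC]]]; first by [].
  have qC : q \in C by rewrite eC mem_rcons mem_head.
  move: (qC); rewrite mem_filter /= => /andP[qp qs].
  have sq : slt le q p by rewrite /slt h2 //= eq_sym.
  apply: (leq_trans _ (@leq_bigmax_cond _ (fun q => slt le q p) (Lm m) q sq)); rewrite eC; apply: L1.
  move: hC; rewrite eC pairwise_rcons => /andP[ha hp].
  rewrite /chainb all_rcons refl ha (sorted_pairwise trans) pairwise_rcons ha hp /=.
  apply/forallP => x; rewrite -eC count_mem_filter; case: ifP => // _; exact: h3.
case: (Mx_spec (Lm m) p) => [->|[q [hq <-]]].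
  have := @L1 m p (nseq (m p) p); rewrite size_nseq; apply.
  have := @ext m [::] p; apply => //; rewrite /chainb /=; apply/forallP => q //.
have [s [hs <-]] := L2 m q.
have hsp : chainb p m s.
  case/and3P: hs => h1 /allP h2 h3; rewrite /chainb h1 h3 andbT.
  by apply/allP => x hx; apply: trans (h2 x hx) _; case/andP: hq.
have pns : p \notin s.
  apply/negP => ps; case/andP: hq => hqp /eqP; apply; apply: anti.
  by rewrite hqp; case/and3P: hs => _ /allP h2 _; exact: h2.
by have := L1 (ext hsp pns); rewrite size_cat size_nseq.
Qed.

Definition Lf m : {ffun 'I_n -> nat} := [ffun p => Lm m p].

Lemma Lf_iso m : isotone le (Lf m).
Proof. by move=> p q h; rewrite !ffunE; exact: Lm_iso. Qed.

Lemma MxLf m p : Mx (Lf m) p = Mx (Lm m) p.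
Proof. by apply: eq_bigr => q _; rewrite ffunE. Qed.

Lemma Lf_asc m : ascent_mon le (Lf m) = m.
Proof.
apply/mnmP => p; rewrite ascent_monE MxLf ffunE (Lm_rec m p); lia.
Qed.

Lemma Lf_inv phi : isotone le phi -> Lf (ascent_mon le phi) = phi.
Proof. by move=> h; apply: asc_inj => //; [exact: Lf_iso | rewrite Lf_asc]. Qed.


Lemma count3 (T : Type) (P1 P2 P3 : pred T) (s : seq T) :
  (forall x, P1 x + P2 x + P3 x = 1)%N ->
  size s = (count P1 s + count P2 s + count P3 s)%N.
Proof.
move=> H; elim: s => //= x s IH; move: (H x).
case: (P1 x); case: (P2 x); case: (P3 x) => //= _; rewrite IH; lia.
Qed.

Variable k : fieldType.
Variable I : {pred {mpoly k[n]}}.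

Lemma step (phi : {ffun 'I_n -> nat}) a :
  P_stable le I -> isotone le phi -> isotone le [ffun p => (phi p + (p == a))%N] ->
  'X_[ascent_mon le phi] \in I ->
  'X_[ascent_mon le [ffun p => (phi p + (p == a))%N]] \in I.
Proof.
move=> hS hphi hphi' hin.
set phi' := [ffun p => _] in hphi' *.
have phi'E : forall p, phi' p = (phi p + (p == a))%N by move=> p; rewrite ffunE.
set B := [set b | slt le a b && (Mx phi b == phi a)].
have MxE : forall p, Mx phi' p =
    if slt le a p then maxn (Mx phi p) (phi a).+1 else Mx phi p.
  move=> p; case: ifP => hap.
    rewrite /Mx (bigD1 a hap) [X in _ = maxn X _](bigD1 a hap) /= phi'E eqxx.
    rewrite (eq_bigr (fun q : 'I_n => phi q)); last first.
      by move=> q /andP[_ hq]; rewrite phi'E (negbTE hq) addn0.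
    lia.
  apply: eq_bigr => q hq; rewrite phi'E; case: eqP => [eq|_]; last by rewrite addn0.
  by rewrite eq hap in hq.
have Mx_ge : forall p, slt le a p -> (phi a <= Mx phi p)%N.
  by move=> p hp; exact: (@leq_bigmax_cond _ (fun q => slt le q p) phi a hp).
have hlt : forall p, slt le a p -> (phi a < phi p)%N.
  move=> p /andP[hap hne]; have := hphi' a p hap; rewrite !phi'E eqxx.
  by rewrite eq_sym (negbTE hne); lia.
have hMxle := fun p => Mx_le p hphi.
set m0 : 'X_{1..n} := [multinom (ascent_mon le phi p - (p \in B))%N | p < n].
have m0E : forall p, m0 p = (ascent_mon le phi p - (p \in B))%N.
  by move=> p; rewrite /m0 mnmE.
have msE : forall p, mon_of_set B p = (p \in B) by move=> p; rewrite /mon_of_set mnmE.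
have E1 : ascent_mon le phi = (m0 + mon_of_set B)%MM.
  apply/mnmP => p; rewrite mnmDE m0E msE ascent_monE.
  case: (boolP (p \in B)) => hB /=; last by lia.
  move: (hB); rewrite inE => /andP[hap /eqP e]; have := hlt p hap; lia.
have E2 : ascent_mon le phi' = (m0 + mnm1 a)%MM.
  apply/mnmP => p; rewrite mnmDE mnm1E m0E !ascent_monE MxE phi'E.
  case: (eqVneq a p) => [<-|ne].
    have haa : slt le a a = false by rewrite /slt eqxx andbF.
    have hB : (a \in B) = false by rewrite inE haa.
    rewrite haa hB; have := hMxle a; lia.
  rewrite inE.
  case hap: (slt le a p) => /=; last by lia.
  have := Mx_ge p hap; have := hlt p hap; have := hMxle p.
  case: eqP => /= h; lia.
have hanti : antichain le B.
  have key : forall b b', b \in B -> b' \in B -> b != b' -> ~~ le b b'.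
    move=> b b' hb hb' hne; apply/negP => hbb.
    move: hb hb'; rewrite !inE => /andP[hab _] /andP[_ /eqP e'].
    have sbb : slt le b b' by rewrite /slt hbb hne.
    have := @leq_bigmax_cond _ (fun q => slt le q b') phi b sbb.
    rewrite -/(Mx phi b') e'; have := hlt b hab; lia.
  move=> b b' hb hb' hne; split; first exact: key.
  by apply: key => //; rewrite eq_sym.
rewrite -/phi' E2; apply: (hS m0 B a hanti); first by rewrite -E1.
move=> b hb; rewrite -E1.
set m := ascent_mon le phi.
have hL : Lf m = phi := Lf_inv hphi.
have LmE : forall p, Lm m p = phi p.
  by move=> p; have := congr1 (fun f : {ffun 'I_n -> nat} => f p) hL; rewrite /= ffunE.
move: (hb); rewrite inE => /andP[hab /eqP eMb].
have [Ca [hCa eCa]] := L2 m a.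
have hCab : chainb b m Ca.
  case/and3P: hCa => h1 /allP h2 h3; rewrite /chainb h1 h3 andbT.
  by apply/allP => x hx; apply: trans (h2 x hx) _; case/andP: hab.
have bCa : b \notin Ca.
  apply/negP => hbC; case/andP: hab => hab' /eqP; case; apply: anti.
  by rewrite hab'; case/and3P: hCa => _ /allP h2 _; exact: h2.
exists (Ca ++ nseq (m b) b); split.
  split; first exact/bchain_inP/ext.
  move=> C' /bchain_inP hC'; have := L1 hC'; rewrite LmE size_cat size_nseq eCa LmE.
  rewrite /m ascent_monE eMb; have := hlt b hab; lia.
split; first by case/andP: hab.
move=> x; rewrite mem_cat mem_nseq => /orP[hx|/andP[_ /eqP ->]].
  by case/and3P: hCa => _ /allP h2 _; rewrite (h2 x hx) orbT.
by case/andP: hab => ->.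
Qed.

Lemma up (phi psi : {ffun 'I_n -> nat}) : P_stable le I ->
  isotone le phi -> isotone le psi -> (forall p, phi p <= psi p)%N ->
  'X_[ascent_mon le phi] \in I -> 'X_[ascent_mon le psi] \in I.
Proof.
move=> hS hphi0; move: phi hphi0; suff H : forall d (phi : {ffun 'I_n -> nat}),
    (\sum_p (psi p - phi p) < d)%N -> isotone le phi -> isotone le psi ->
    (forall p, phi p <= psi p)%N ->
    'X_[ascent_mon le phi] \in I -> 'X_[ascent_mon le psi] \in I.
  by move=> phi hphi; apply: (H _ phi (ltnSn _)) hphi.
elim => // d IH phi hd hphi hpsi hle hin.
case: (boolP [exists p, phi p < psi p]%N) => [/existsP[p0 hp0] | /existsPn hno]; last first.
  have -> : psi = phi by apply/ffunP => p; change (psi p = phi p); move: (hno p) (hle p); rewrite -leqNgt; lia.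
  exact: hin.
case: (@arg_maxnP _ p0 (fun p => phi p < psi p)%N nb hp0) => a ha hmax.
set phi' := [ffun p => (phi p + (p == a))%N].
have phi'E : forall p, phi' p = (phi p + (p == a))%N by move=> p; rewrite ffunE.
have hphi' : isotone le phi'.
  move=> p q hpq; rewrite !phi'E; have := hphi p q hpq.
  case: (eqVneq p a) => [epa|pa]; case: (eqVneq q a) => [eqa|qa] /=; try lia.
  rewrite epa in hpq *.
  case: (ltnP (phi a) (phi q)) => h; first lia.
  have hq : (phi q < psi q)%N by have := hpsi _ _ hpq; lia.
  have := hmax q hq; have : slt le a q by rewrite /slt hpq eq_sym qa.
  by move/nb_lt; lia.
apply: (IH phi') => //.
- have : ((\sum_p (psi p - phi' p)).+1 <= \sum_p (psi p - phi p))%N.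
    rewrite (bigD1 a) //= [X in (_ <= X)%N](bigD1 a) //= phi'E eqxx.
    rewrite (eq_bigr (fun p : 'I_n => psi p - phi p)%N); last first.
      by move=> p hp; rewrite phi'E (negbTE hp) addn0.
    lia.
  by move=> h; have := leq_ltn_trans h hd; rewrite ltnS.
- by move=> p; rewrite phi'E; case: eqP => [->|_]; have := hle p; lia.
- exact: step.
Qed.

Lemma forward (F : {ffun 'I_n -> nat} -> Prop) : hom_filter le F ->
  (forall m : 'X_{1..n}, 'X_[m] \in I <-> exists phi, F phi /\ ascent_mon le phi = m) ->
  P_stable le I.
Proof.
move=> [hiso hup] hspec m0 B a hanti hin hch.
set m := (m0 + mon_of_set B)%MM in hin hch.
set m' := (m0 + mnm1 a)%MM.
have msE : forall p, mon_of_set B p = (p \in B) by move=> p; rewrite /mon_of_set mnmE.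
have mE : forall p, m p = (m0 p + (p \in B))%N by move=> p; rewrite mnmDE msE.
have m'E : forall p, m' p = (m0 p + (a == p))%N by move=> p; rewrite mnmDE mnm1E.
have [phi [hF ephi]] := (hspec m).1 hin.
have ephi2 : Lf m = phi by rewrite -ephi Lf_inv //; exact: hiso.
have hmon : forall p, (Lm m p <= Lm m' p)%N.
  apply: poset_ind => p IH.
  have hM : (Mx (Lm m) p <= Mx (Lm m') p)%N.
    apply/bigmax_leqP => q hq; apply: leq_trans (IH q hq) _.
    exact: (@leq_bigmax_cond _ (fun q => slt le q p) (Lm m') q hq).
  case: (boolP (p \in B)) => hpB; last first.
    by rewrite (Lm_rec m p) (Lm_rec m' p) mE m'E (negbTE hpB); lia.
  case: (eqVneq a p) => [eap|nap].
    by rewrite (Lm_rec m p) (Lm_rec m' p) mE m'E hpB eap eqxx; lia.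
  have [C [[hCin hlong] [hab hthr]]] := hch p hpB.
  have [s [hs es]] := L2 m p.
  have hsC : (size s <= size C)%N by apply: hlong; exact/bchain_inP.
  move/bchain_inP: hCin => /and3P[hC1 /allP hC2 /forallP hC3].
  have hap : slt le a p by rewrite /slt hab nap.
  have pa : ~~ le p a.
    by apply/negP => hpa; move/eqP: nap; apply; apply: anti; rewrite hab hpa.
  have notB : forall x, le x p -> x != p -> x \notin B.
    move=> x hx hne; apply/negP => xB; have [h _] := hanti x p xB hpB hne.
    by rewrite hx in h.
  have pC : pairwise le C by rewrite -(sorted_pairwise trans).
  set Dlo := filter (le^~ a) C.
  set Dmid := filter (fun x => ~~ le x a && (x != p)) C.
  set D := Dlo ++ a :: (Dmid ++ nseq (m0 p) p).
  have hDmid : forall y, y \in Dmid -> le a y /\ le y p.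
    move=> y; rewrite mem_filter => /andP[/andP[hya _] yC]; split; last exact: hC2.
    by have := hthr y yC; rewrite (negbTE hya) orbF.
  have hDlo : forall y, y \in Dlo -> le y a.
    by move=> y; rewrite mem_filter => /andP[].
  have hD : chainb p m' D.
    apply/and3P; split.
    - rewrite (sorted_pairwise trans) pairwise_cat pairwise_cons pairwise_cat.
      rewrite !pairwise_filter // pairwise_nseq /= !andbT.
      apply/and3P; split.
      + apply/allrelP => x y hx; rewrite inE mem_cat mem_nseq.
        case/orP => [/eqP ->|/orP[hy|/andP[_ /eqP ->]]]; first exact: hDlo.
          by apply: trans (hDlo x hx) (proj1 (hDmid y hy)).
        by apply: trans (hDlo x hx) hab.
      + apply/allP => y; rewrite mem_cat mem_nseq => /orP[hy|/andP[_ /eqP ->]] //.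
        exact: (proj1 (hDmid y hy)).
      + apply/allrelP => x y hx; rewrite mem_nseq => /andP[_ /eqP ->].
        exact: (proj2 (hDmid x hx)).
    - rewrite all_cat /= all_cat all_nseq refl orbT hab !andbT; apply/andP; split.
        by apply/allP => x hx; apply: trans (hDlo x hx) hab.
      by apply/allP => x hx; exact: (proj2 (hDmid x hx)).
    - apply/forallP => q; rewrite m'E count_cat /= count_cat count_nseq.
      rewrite !count_mem_filter /=.
      have h3 := hC3 q; rewrite mE in h3.
      case hqa: (le q a) => /=.
        have qp : q != p by apply/negP => /eqP eq; move: pa; rewrite -eq hqa.
        have qB : q \notin B by apply: notB => //; exact: trans hqa hab.
        rewrite (negbTE qB) in h3; have -> : (p == q) = false by rewrite eq_sym (negbTE qp).
        by move: h3; case: (a == q) => /=; rewrite ?mul0n ?addn0 ?leq_add2r.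
      have aq : (a == q) = false by apply/negP => /eqP eq; move: hqa; rewrite eq refl.
      rewrite aq /=.
      case: (eqVneq q p) => [->|qp] /=.
        by rewrite !add0n mul1n addn0.
      rewrite !add0n mul0n !addn0.
      case: (boolP (q \in B)) => qB; last by rewrite (negbTE qB) addn0 in h3.
      suff -> : count_mem q C = 0%N by [].
      apply/count_memPn; apply/negP => qC.
      by move: (notB q (hC2 q qC) qp); rewrite qB.
  apply: leq_trans (L1 hD); rewrite -es; apply: (leq_trans hsC).
  have hcnt : (count_mem p C <= m0 p + 1)%N by have := hC3 p; rewrite mE hpB.
  rewrite (@count3 _ (le^~ a) (fun x => ~~ le x a && (x != p)) (pred1 p) C); last first.
    move=> x /=; case hxa: (le x a) => /=.
      have : x != p by apply/negP => /eqP eq; move: pa; rewrite -eq hxa.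
      by move/negbTE => ->.
    by case: (x == p).
  rewrite /D size_cat /= size_cat size_nseq /Dlo /Dmid !size_filter.
  by rewrite -addnA leq_add2l -addnS leq_add2l -addn1.
have hF' : F (Lf m') by apply: (hup phi) => //; [exact: Lf_iso | move=> p; rewrite -ephi2 !ffunE].
by apply/(hspec m').2; exists (Lf m'); rewrite Lf_asc.
Qed.

End S.

Local Open Scope ring_scope.

Theorem proposition3p11 (k : fieldType) (n : nat) (le : rel 'I_n)
    (I : {pred {mpoly k[n]}}) :
  partial_order le -> is_monomial_ideal I ->
  (exists F : {ffun 'I_n -> nat} -> Prop,
      hom_filter le F /\
      (forall m : 'X_{1..n}, 'X_[m] \in I <->
         exists phi, F phi /\ ascent_mon le phi = m))
  <-> P_stable le I.
Proof.
move=> po _; split.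
  by case=> F [hF hspec]; exact: (forward po hF hspec).
move=> hS.
exists (fun phi => isotone le phi /\ 'X_[ascent_mon le phi] \in I); split.
  split; first by move=> phi [].
  by move=> phi psi [h1 h2] h3 h4; split => //; exact: (up po hS h1 h3 h4).
move=> m; split.
  by move=> hm; exists (Lf le m); rewrite (Lf_asc po); split => //; split => //; exact: Lf_iso.
by move=> [phi [[_ h] <-]].
Qed.
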